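(* Let $n\ge 0$ be an integer and let $a,b\in\mathbb{C}$ with $a\neq 0$. Then \[ \sum_{k=0}^n\frac{(-1)^k}{1+k}\binom{a+k}{k}\binom{b+n}{n-k}=\frac{1}{a}\binom{b+n}{1+n}-\frac{1}{a}\binom{b-a+n}{1+n}. \]
   Context: For $x\in\mathbb{C}$ and an integer $m\ge0$, the generalized binomial coefficient is $\binom{x}{m}=\frac{x(x-1)\cdots(x-m+1)}{m!}$ (with $\binom{x}{0}=1$). *)

(* Defs.v *)
From HB Require Import structures.
From mathcomp Require Import all_boot all_order all_algebra.
Set Implicit Arguments. Unset Strict Implicit. Unset Printing Implicit Defensive.
Import Order.TTheory GRing.Theory Num.Theory.
Local Open Scope ring_scope.

Definition gbinom (R : fieldType) (x : R) (m : nat) : R :=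
  (\prod_(i < m) (x - i%:R)) / (m`!)%:R.

(* Main.v *)
Require Import Defs.
From HB Require Import structures.
From mathcomp Require Import all_boot all_order all_algebra.
From mathcomp Require Import ring.
Import Order.TTheory GRing.Theory Num.Theory.
Local Open Scope ring_scope.

Section G.
Variable C : numClosedFieldType.

Lemma fact_neq0 m : (m`!)%:R != 0 :> C.
Proof. by rewrite pnatr_eq0 -lt0n fact_gt0. Qed.
Lemma succ_neq0 m : (m.+1)%:R != 0 :> C.
Proof. by rewrite pnatr_eq0. Qed.

Lemma gbinom0 (x : C) : gbinom x 0 = 1.
Proof. by rewrite /gbinom big_ord0 divr1. Qed.

Lemma gbinom_abs (x : C) m : (m.+1)%:R * gbinom x m.+1 = x * gbinom (x - 1) m.
Proof.
rewrite /gbinom big_ord_recl /= factS natrM subr0.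
have -> : \prod_(i < m) (x - (bump 0 i)%:R) = \prod_(i < m) (x - 1 - i%:R).
  by apply: eq_bigr => i _; rewrite /bump /= add1n -natr1; ring.
have h1 := fact_neq0 m; have h2 := succ_neq0 m.
field; rewrite ?h1 //= addrC natr1 //.
Qed.

Lemma gbinom_neg (a : C) k : gbinom (- a - 1) k = (-1) ^+ k * gbinom (a + k%:R) k.
Proof.
rewrite /gbinom mulrA; congr (_ / _).
rewrite (reindex_inj rev_ord_inj) /=.
rewrite -[in (-1) ^+ k](card_ord k) -prodr_const -big_split /=.
apply: eq_bigr => i _.
have hi : (i.+1 <= k)%N := ltn_ord i.
rewrite natrB // -natr1; ring.

Qed.

Lemma vander m : forall x y : C,
  \sum_(j < m.+1) gbinom x j * gbinom y (m - j) = gbinom (x + y) m.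
Proof.
elim: m => [|m IH] x y.
  by rewrite big_ord_recl big_ord0 !gbinom0 addr0 mulr1.
apply: (mulfI (succ_neq0 m)).
rewrite gbinom_abs mulr_sumr.
have -> : (x + y) * gbinom (x + y - 1) m
   = x * gbinom (x - 1 + y) m + y * gbinom (x + (y - 1)) m.
  have e1 : x - 1 + y = x + y - 1 by ring.
  have e2 : x + (y - 1) = x + y - 1 by ring.
  by rewrite e1 e2 mulrDl.
rewrite -IH -IH !mulr_sumr.
have -> : \sum_(i < m.+2) (m.+1)%:R * (gbinom x i * gbinom y (m.+1 - i))
  = \sum_(i < m.+2) (i%:R * gbinom x i) * gbinom y (m.+1 - i)
  + \sum_(i < m.+2) gbinom x i * ((m.+1 - i)%:R * gbinom y (m.+1 - i)).
  rewrite -big_split /=; apply: eq_bigr => i _.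
  have hi : (i <= m.+1)%N by rewrite -ltnS.
  rewrite natrB //; ring.
congr (_ + _).
  rewrite big_ord_recl /= mul0r mul0r add0r.
  apply: eq_bigr => i _; rewrite /bump /= add1n gbinom_abs subSS; ring.
rewrite big_ord_recr /= subnn mul0r mulr0 addr0.
apply: eq_bigr => i _.
have hi : (i <= m)%N by rewrite -ltnS.
rewrite subSn // gbinom_abs; ring.
Qed.
End G.

Theorem mainTheorem15 (C : numClosedFieldType) (n : nat) (a b : C) (ha : a != 0) :
  \sum_(k < n.+1) ((-1) ^+ k / (1 + k%:R)) * gbinom (a + k%:R) k
                    * gbinom (b + n%:R) (n - k)
  = a^-1 * gbinom (b + n%:R) n.+1 - a^-1 * gbinom (b - a + n%:R) n.+1.
Proof.
have key : forall k : nat, (-1) ^+ k / (1 + k%:R) * gbinom (a + k%:R) k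
   = - a^-1 * gbinom (- a) k.+1.
  move=> k.
  have e := gbinom_abs C (- a) k.
  rewrite gbinom_neg in e.
  have hk := succ_neq0 C k.
  have -> : gbinom (- a) k.+1 = - a * ((-1) ^+ k * gbinom (a + k%:R) k) / (k.+1)%:R.
    by rewrite -e mulrAC mulfV // mul1r.
  rewrite -natr1 addrC; field.
  by rewrite ha natr1 hk.
under eq_bigr do rewrite key -mulrA.
rewrite -mulr_sumr.
have V := vander C n.+1 (- a) (b + n%:R).
rewrite big_ord_recl gbinom0 mul1r subn0 in V.
have -> : \sum_(i < n.+1) gbinom (- a) i.+1 * gbinom (b + n%:R) (n - i)
   = gbinom (- a + (b + n%:R)) n.+1 - gbinom (b + n%:R) n.+1.
  by rewrite -V addrAC subrr add0r; apply: eq_bigr => i _; rewrite /bump /= ?add1n ?subSS.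
rewrite (_ : - a + (b + n%:R) = b - a + n%:R); last by ring.
ring.
Qed.
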